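(* Let $(X,V)=(X(t),V(t))_{t\ge0}$ be the global solution of the continuous Motsch–Tadmor model and, for each admissible time-step $h>0$, let $(X^h,V^h)=(X^h(n),V^h(n))_{n\ge0}$ be the solution of the discrete Motsch–Tadmor model with time-step $h$, both with the same initial data $(X^h(0),V^h(0))=(X(0),V(0))$ (all as described in the context, under the standing assumptions there). Assume that $\mathcal{D}(V(0))\le \kappa\int_{\mathcal{D}(X(0))}^{\infty} a(s)\,ds$, and that \[ \|\Delta^x(0)\|_F<M \quad\text{and}\quad \|\Delta^v(0)\|_F<\kappa\int_{\|\Delta^x(0)\|_F}^{M}\psi(s)\,ds . \] Then there is a constant $c_0=c_0(\kappa,N,a)$, independent of $n$ and $h$, such that \[ \limsup_{h\to0}\ \sup_{0\le n<\infty}\|\Delta^{x,h}(n)-\Delta^x(nh)\|_F\le c_0\,\mathcal{D}(V(0)),\qquad \limsup_{h\to0}\ \sup_{0\le n<\infty}\|V^h(n)-V(nh)\|=0 . \]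
   Context: Fix integers $N\ge1$, $d\ge1$, coupling strength $\kappa>0$ and a communication function $a:[0,\infty)\to\mathbb{R}$ with constants $0<c_1\le c_2$ such that $c_1\le a(r)\le c_2$ for all $r\ge0$ and $a$ Lipschitz with constant $L_a>0$. Time-steps are always taken with $0<h<\min\{1,1/\kappa\}$. Continuous MT model: $\dot x_i=v_i$, $\dot v_i=\kappa\sum_{j=1}^N\phi_{ij}(v_j-v_i)$, $i=1,\dots,N$, with $\phi_{ij}=\frac{a(\|x_i-x_j\|)}{\sum_{k=1}^N a(\|x_i-x_k\|)}$ ($\|\cdot\|$ Euclidean on $\mathbb{R}^d$). Discrete MT model with step $h$: $x^h_i(n+1)=x^h_i(n)+hv^h_i(n)$, $v^h_i(n+1)=v^h_i(n)+h\kappa\sum_{j=1}^N\phi^h_{ij}(n)(v^h_j(n)-v^h_i(n))$, with $\phi^h_{ij}(n)=\frac{a(\|x^h_i(n)-x^h_j(n)\|)}{\sum_k a(\|x^h_i(n)-x^h_k(n)\|)}$. Notation: $X=(x_1,\dots,x_N)$, $V=(v_1,\dots,v_N)$, $\|V\|$ the Euclidean norm on $(\mathbb{R}^d)^N$; $\mathcal{D}(X)=\max_{i,j}\|x_i-x_j\|$, $\mathcal{D}(V)=\max_{i,j}\|v_i-v_j\|$; $\Delta^x_{ij}=x_i-x_j$, $\Delta^v_{ij}=v_i-v_j$, $\|\Delta^x\|_F=(\sum_{i,j}\|\Delta^x_{ij}\|^2)^{1/2}$, $\|\Delta^v\|_F$ likewise; $\Delta^{x,h}(n)$ is the matrix $[x^h_i(n)-x^h_j(n)]$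 and $\Delta^x(nh)$ is $[x_i(nh)-x_j(nh)]$. Constants: $\|\phi\|_{\mathrm{Lip}}=\frac{L_a}{Nc_1}(1+\frac{c_2}{c_1})$, $M=\frac{1}{4N\|\phi\|_{\mathrm{Lip}}}$, $\psi(s)=1-\|\phi\|_{\mathrm{Lip}}Ns$. *)

(* Defs.v *)
From Stdlib Require Import Reals Lra.
From Coquelicot Require Import Coquelicot.
Open Scope R_scope.

(* A configuration: agent index i (< N) and coordinate k (< d) -> real.
   So x i : R^d is the position (or velocity) of agent i. *)
Definition config := nat -> nat -> R.

Fixpoint sumR (n : nat) (f : nat -> R) : R :=
  match n with
  | O => 0
  | S m => sumR m f + f m
  end.

Fixpoint maxR (n : nat) (f : nat -> R) : R :=
  match n with
  | O => 0
  | S m => Rmax (maxR m f) (f m)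
  end.

Definition enorm (d : nat) (u : nat -> R) : R := sqrt (sumR d (fun k => (u k)^2)).

Definition dist_ij (d : nat) (x : config) (i j : nat) : R :=
  enorm d (fun k => x i k - x j k).

Definition diam (N d : nat) (x : config) : R :=
  maxR N (fun i => maxR N (fun j => dist_ij d x i j)).

Definition fro (N d : nat) (x : config) : R :=
  sqrt (sumR N (fun i => sumR N (fun j => (dist_ij d x i j)^2))).

Definition fro_diff (N d : nat) (x' x : config) : R :=
  sqrt (sumR N (fun i => sumR N (fun j =>
     sumR d (fun k => ((x' i k - x' j k) - (x i k - x j k))^2)))).

Definition full_norm_diff (N d : nat) (v' v : config) : R :=
  sqrt (sumR N (fun i => sumR d (fun k => (v' i k - v i k)^2))).

Definition mt_weight (N d : nat) (a : R -> R) (x : config) (i j : nat) : R :=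
  a (dist_ij d x i j) / sumR N (fun l => a (dist_ij d x i l)).

Definition mt_force (N d : nat) (kappa : R) (a : R -> R) (x v : config) (i k : nat) : R :=
  kappa * sumR N (fun j => mt_weight N d a x i j * (v j k - v i k)).

Fixpoint mt_discrete (N d : nat) (kappa : R) (a : R -> R) (h : R)
    (x0 v0 : config) (n : nat) : config * config :=
  match n with
  | O => (x0, v0)
  | S m =>
      let (x, v) := mt_discrete N d kappa a h x0 v0 m in
      ((fun i k => x i k + h * v i k),
       (fun i k => v i k + h * mt_force N d kappa a x v i k))
  end.

Definition phi_lip (N : nat) (La c1 c2 : R) : R := La / (INR N * c1) * (1 + c2 / c1).
Definition M_const (N : nat) (La c1 c2 : R) : R := 1 / (4 * INR N * phi_lip N La c1 c2).
Definition psi_fun (N : nat) (La c1 c2 : R) (s : R) : R := 1 - phi_lip N La c1 c2 * INR N * s.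

Definition mt_solution (N d : nat) (kappa : R) (a : R -> R) (X V : R -> config) : Prop :=
  (forall i k, (i < N)%nat -> (k < d)%nat ->
     forall t, 0 < t ->
       is_derive (fun s => X s i k) t (V t i k) /\
       is_derive (fun s => V s i k) t (mt_force N d kappa a (X t) (V t) i k)) /\
  (forall i k, (i < N)%nat -> (k < d)%nat ->
     filterlim (fun s => X s i k) (at_right 0) (locally (X 0 i k)) /\
     filterlim (fun s => V s i k) (at_right 0) (locally (V 0 i k))).

(* Main.v *)
Require Import Defs.
From Stdlib Require Import Reals Lra Lia.
From Coquelicot Require Import Coquelicot.
Open Scope R_scope.

Lemma sumR_ext n f g : (forall i, (i < n)%nat -> f i = g i) -> sumR n f = sumR n g.
Proof. induction n; simpl; intros H; auto. rewrite IHn by (intros; apply H; lia). rewrite H by lia. auto. Qed.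

Lemma sumR_le n f g : (forall i, (i < n)%nat -> f i <= g i) -> sumR n f <= sumR n g.
Proof. induction n; simpl; intros H; [lra|]. assert (f n <= g n) by (apply H; lia).
 assert (sumR n f <= sumR n g) by (apply IHn; intros; apply H; lia). lra. Qed.

Lemma sumR_const n c : sumR n (fun _ => c) = INR n * c.
Proof. induction n; simpl sumR; [simpl; ring|]. rewrite IHn, S_INR. ring. Qed.

Lemma sumR_plus n f g : sumR n (fun i => f i + g i) = sumR n f + sumR n g.
Proof. induction n; simpl; [ring|]. rewrite IHn; ring. Qed.

Lemma sumR_scal n c f : sumR n (fun i => c * f i) = c * sumR n f.
Proof. induction n; simpl; [ring|]. rewrite IHn; ring. Qed.

Lemma sumR_minus n f g : sumR n (fun i => f i - g i) = sumR n f - sumR n g.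
Proof. induction n; simpl; [ring|]. rewrite IHn; ring. Qed.

Lemma sumR_abs n f : Rabs (sumR n f) <= sumR n (fun i => Rabs (f i)).
Proof. induction n; simpl. rewrite Rabs_R0; lra.
 eapply Rle_trans; [apply Rabs_triang|]. lra. Qed.

Lemma sumR_nonneg n f : (forall i, (i < n)%nat -> 0 <= f i) -> 0 <= sumR n f.
Proof. intros H. replace 0 with (sumR n (fun _ => 0)). apply sumR_le; auto.
 rewrite sumR_const; ring. Qed.

Lemma sumR_term n f i : (forall j, (j < n)%nat -> 0 <= f j) -> (i < n)%nat -> f i <= sumR n f.
Proof. induction n; intros H Hi; [lia|]. simpl.
 destruct (Nat.eq_dec i n). subst. assert (0 <= sumR n f) by (apply sumR_nonneg; intros; apply H; lia). lra.
 assert (f i <= sumR n f) by (apply IHn; [intros; apply H|]; lia). assert (0 <= f n) by (apply H; lia). lra. Qed.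

Lemma maxR_ge n f i : (i < n)%nat -> f i <= maxR n f.
Proof. induction n; intros Hi; [lia|]. simpl. destruct (Nat.eq_dec i n). subst. apply Rmax_r.
 eapply Rle_trans; [apply IHn; lia| apply Rmax_l]. Qed.

Lemma maxR_nonneg n f : 0 <= maxR n f.
Proof. induction n; simpl; [lra|]. eapply Rle_trans; [apply IHn|apply Rmax_l]. Qed.

Lemma dist_le_diam N d x i j : (i < N)%nat -> (j < N)%nat -> dist_ij d x i j <= diam N d x.
Proof. intros Hi Hj. unfold diam. eapply Rle_trans; [|apply (maxR_ge _ _ i Hi)]. simpl.
 apply (maxR_ge _ (fun j => dist_ij d x i j) j Hj). Qed.

Lemma diam_nonneg N d x : 0 <= diam N d x.
Proof. apply maxR_nonneg. Qed.

Lemma coord_le_enorm d u k : (k < d)%nat -> Rabs (u k) <= enorm d u.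
Proof. intros Hk. unfold enorm. rewrite <- sqrt_Rsqr_abs. apply sqrt_le_1_alt.
 unfold Rsqr. replace (u k * u k) with ((u k)^2) by ring.
 apply (sumR_term d (fun k => (u k)^2)); auto. intros; apply pow2_ge_0. Qed.

Lemma coord_le_diam N d x i j k : (i < N)%nat -> (j < N)%nat -> (k < d)%nat ->
  Rabs (x i k - x j k) <= diam N d x.
Proof. intros. eapply Rle_trans; [|apply (dist_le_diam N d x i j); eauto].
 apply (coord_le_enorm d (fun k => x i k - x j k)); auto. Qed.

Lemma enorm_nonneg d u : 0 <= enorm d u.
Proof. apply sqrt_pos. Qed.

Lemma enorm_lip d u w del : (forall k, (k < d)%nat -> Rabs (u k - w k) <= del) ->
  Rabs (enorm d u - enorm d w) <= INR d * del.
Proof. intros H.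
 assert (Hd : 0 <= del \/ d = 0%nat). { destruct d. auto. left. specialize (H 0%nat ltac:(lia)).
   pose proof (Rabs_pos (u 0%nat - w 0%nat)); lra. }
 set (A := sumR d (fun k => (u k)^2)). set (B := sumR d (fun k => (w k)^2)).
 assert (HA : 0 <= A) by (apply sumR_nonneg; intros; apply pow2_ge_0).
 assert (HB : 0 <= B) by (apply sumR_nonneg; intros; apply pow2_ge_0).
 assert (HAB : Rabs (A - B) <= del * (INR d * sqrt A + INR d * sqrt B)).
 { unfold A, B. rewrite <- sumR_minus.
   eapply Rle_trans; [apply sumR_abs|].
   rewrite <- !sumR_const. rewrite <- sumR_plus. rewrite <- sumR_scal. apply sumR_le. intros k Hk.
   pose proof (coord_le_enorm d u k Hk). pose proof (coord_le_enorm d w k Hk). unfold enorm in *.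
   replace ((u k)^2 - (w k)^2) with ((u k - w k) * (u k + w k)) by ring.
   rewrite Rabs_mult. apply Rmult_le_compat; try apply Rabs_pos; auto.
   eapply Rle_trans; [apply Rabs_triang|]. fold A in H0. fold B in H1. fold A B. lra. }
 unfold enorm. fold A B.
 destruct Hd as [Hd|Hd]; [|subst; unfold A, B; simpl; rewrite sqrt_0; rewrite Rminus_0_r, Rabs_R0; lra].
 pose proof (sqrt_pos A). pose proof (sqrt_pos B).
 pose proof (sqrt_sqrt A HA). pose proof (sqrt_sqrt B HB). pose proof (pos_INR d).
 destruct (Req_dec (sqrt A + sqrt B) 0) as [Hz|Hz].
 - assert (E1: sqrt A = 0) by lra. assert (E2: sqrt B = 0) by lra. rewrite E1, E2, Rminus_0_r, Rabs_R0. nra.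
 - assert (Hp : 0 < sqrt A + sqrt B) by lra.
   replace (A - B) with ((sqrt A - sqrt B) * (sqrt A + sqrt B)) in HAB by nra.
   rewrite Rabs_mult, (Rabs_right (sqrt A + sqrt B)) in HAB by lra.
   apply Rmult_le_reg_r with (sqrt A + sqrt B); auto. nra. Qed.

Lemma Rabs_le_inv x y : Rabs x <= y -> - y <= x <= y.
Proof. unfold Rabs; destruct (Rcase_abs x); intros; lra. Qed.



Lemma conv_upper n w wm c v i M : (i < n)%nat -> (forall j, (j < n)%nat -> wm <= w j) ->
  sumR n w = 1 -> 0 <= c <= 1 -> (forall j, (j < n)%nat -> v j <= M) ->
  (1 - c) * v i + c * sumR n (fun j => w j * v j) <= (1 - c * (INR n * wm)) * M + c * wm * sumR n v.
Proof. intros Hi Hw Hs Hc Hv.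
 assert (E : sumR n (fun j => w j * v j) = sumR n (fun j => (w j - wm) * v j) + wm * sumR n v).
 { rewrite <- sumR_scal, <- sumR_plus. apply sumR_ext; intros; ring. }
 assert (Hle : sumR n (fun j => (w j - wm) * v j) <= (1 - INR n * wm) * M).
 { replace ((1 - INR n * wm) * M) with (sumR n (fun j => (w j - wm) * M)).
   apply sumR_le. intros j Hj. apply Rmult_le_compat_l. pose proof (Hw j Hj); lra. auto.
   rewrite (sumR_ext _ _ (fun j => M * w j - M * wm)) by (intros; ring).
   rewrite sumR_minus, sumR_scal, sumR_const, Hs. ring. }
 pose proof (Hv i Hi). rewrite E. nra. Qed.

Lemma conv_lower n w wm c v i m : (i < n)%nat -> (forall j, (j < n)%nat -> wm <= w j) ->
  sumR n w = 1 -> 0 <= c <= 1 -> (forall j, (j < n)%nat -> m <= v j) ->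
  (1 - c * (INR n * wm)) * m + c * wm * sumR n v <= (1 - c) * v i + c * sumR n (fun j => w j * v j).
Proof. intros Hi Hw Hs Hc Hv.
 assert (E : sumR n (fun j => w j * v j) = sumR n (fun j => (w j - wm) * v j) + wm * sumR n v).
 { rewrite <- sumR_scal, <- sumR_plus. apply sumR_ext; intros; ring. }
 assert (Hle : (1 - INR n * wm) * m <= sumR n (fun j => (w j - wm) * v j)).
 { replace ((1 - INR n * wm) * m) with (sumR n (fun j => (w j - wm) * m)).
   apply sumR_le. intros j Hj. apply Rmult_le_compat_l. pose proof (Hw j Hj); lra. auto.
   rewrite (sumR_ext _ _ (fun j => m * w j - m * wm)) by (intros; ring).
   rewrite sumR_minus, sumR_scal, sumR_const, Hs. ring. }
 pose proof (Hv i Hi). rewrite E. nra. Qed.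

Section Main.
Variables (N d : nat) (kappa : R) (a : R -> R) (c1 c2 La : R).
Hypothesis HN : (1 <= N)%nat.
Hypothesis Hk : 0 < kappa.
Hypothesis Hc1 : 0 < c1.
Hypothesis Hc12 : c1 <= c2.
Hypothesis HLa : 0 < La.
Hypothesis Ha : forall r, 0 <= r -> c1 <= a r <= c2.
Hypothesis HaL : forall r s, 0 <= r -> 0 <= s -> Rabs (a r - a s) <= La * Rabs (r - s).

Definition Ssum (x : config) i := sumR N (fun l => a (dist_ij d x i l)).

Lemma dist_nonneg x i j : 0 <= dist_ij d x i j.
Proof. apply enorm_nonneg. Qed.

Lemma INRN_pos : 0 < INR N.
Proof. apply lt_0_INR; lia. Qed.

Lemma Ssum_bounds x i : INR N * c1 <= Ssum x i <= INR N * c2.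
Proof. unfold Ssum. rewrite <- !sumR_const. split; apply sumR_le; intros; apply Ha, dist_nonneg. Qed.

Definition wmin := c1 / (INR N * c2).

Lemma wmin_pos : 0 < wmin.
Proof. unfold wmin. pose proof INRN_pos. apply Rdiv_lt_0_compat; nra. Qed.

Lemma weight_ge x i j : wmin <= mt_weight N d a x i j.
Proof. unfold wmin, mt_weight. fold (Ssum x i). pose proof (Ssum_bounds x i). pose proof INRN_pos.
 pose proof (Ha _ (dist_nonneg x i j)). unfold Rdiv. apply Rmult_le_compat; try lra.
 apply Rlt_le, Rinv_0_lt_compat; nra. apply Rinv_le_contravar; nra. Qed.

Lemma weight_sum x i : sumR N (fun j => mt_weight N d a x i j) = 1.
Proof. unfold mt_weight. pose proof (Ssum_bounds x i). pose proof INRN_pos.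
 transitivity (/ Ssum x i * Ssum x i). unfold Ssum at 2. rewrite <- sumR_scal. apply sumR_ext. intros; unfold Rdiv, Ssum; ring.
 field. unfold Ssum in *. nra. Qed.

Lemma weight_nonneg x i j : 0 <= mt_weight N d a x i j.
Proof. pose proof (weight_ge x i j). pose proof wmin_pos. lra. Qed.

Lemma N_wmin : INR N * wmin = c1 / c2.
Proof. unfold wmin. pose proof INRN_pos. field. lra. Qed.

Lemma force_eq x v i k : mt_force N d kappa a x v i k =
  kappa * (sumR N (fun j => mt_weight N d a x i j * v j k) - v i k).
Proof. unfold mt_force. f_equal.
 rewrite (sumR_ext _ _ (fun j => mt_weight N d a x i j * v j k - v i k * mt_weight N d a x i j)) by (intros; ring).
 rewrite sumR_minus, sumR_scal, weight_sum. ring. Qed.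

Definition Lw := 2 * INR d * La / (INR N * c1) + c2 * (INR N * La * 2 * INR d) / ((INR N * c1) * (INR N * c1)).

Lemma Lw_nonneg : 0 <= Lw.
Proof. unfold Lw. pose proof INRN_pos. pose proof (pos_INR d).
 assert (0 < INR N * c1) by nra. unfold Rdiv.
 apply Rplus_le_le_0_compat; apply Rmult_le_pos; try (apply Rlt_le, Rinv_0_lt_compat; nra);
 repeat apply Rmult_le_pos; lra. Qed.

Lemma dist_lip x x' e i j : (i < N)%nat -> (j < N)%nat ->
  (forall i k, (i < N)%nat -> (k < d)%nat -> Rabs (x i k - x' i k) <= e) ->
  Rabs (dist_ij d x i j - dist_ij d x' i j) <= 2 * INR d * e.
Proof. intros Hi Hj H. unfold dist_ij.
 replace (2 * INR d * e) with (INR d * (2 * e)) by ring. apply enorm_lip. intros k Hk'.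
 replace (x i k - x j k - (x' i k - x' j k)) with ((x i k - x' i k) - (x j k - x' j k)) by ring.
 eapply Rle_trans; [apply Rabs_triang|]. rewrite Rabs_Ropp. pose proof (H i k Hi Hk'). pose proof (H j k Hj Hk'). lra. Qed.

Lemma weight_lip x x' e i j : (i < N)%nat -> (j < N)%nat ->
  (forall i k, (i < N)%nat -> (k < d)%nat -> Rabs (x i k - x' i k) <= e) ->
  Rabs (mt_weight N d a x i j - mt_weight N d a x' i j) <= Lw * e.
Proof. intros Hi Hj H. unfold mt_weight. fold (Ssum x i) (Ssum x' i).
 pose proof (Ssum_bounds x i) as [S1 S2]. pose proof (Ssum_bounds x' i) as [S1' S2']. pose proof INRN_pos.
 set (S := Ssum x i) in *. set (S' := Ssum x' i) in *.
 set (r := dist_ij d x i j). set (r' := dist_ij d x' i j).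
 assert (Hr : Rabs (a r - a r') <= La * (2 * INR d * e)).
 { eapply Rle_trans; [apply HaL; apply dist_nonneg|]. apply Rmult_le_compat_l; [lra|]. apply dist_lip; auto. }
 assert (HS : Rabs (S' - S) <= INR N * La * 2 * INR d * e).
 { unfold S, S', Ssum. rewrite <- sumR_minus. eapply Rle_trans; [apply sumR_abs|].
   replace (INR N * La * 2 * INR d * e) with (INR N * (La * (2 * INR d * e))) by ring.
   rewrite <- sumR_const. apply sumR_le. intros l Hl. rewrite Rabs_minus_sym.
   eapply Rle_trans; [apply HaL; apply dist_nonneg|]. apply Rmult_le_compat_l; [lra|]. apply dist_lip; auto. }
 assert (HSp : 0 < S) by nra. assert (HSp' : 0 < S') by nra.
 replace (a r / S - a r' / S') with ((a r - a r') / S + a r' * (S' - S) / (S * S')) by (field; lra).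
 eapply Rle_trans; [apply Rabs_triang|]. unfold Lw.
 rewrite Rmult_plus_distr_r. apply Rplus_le_compat.
 - unfold Rdiv. rewrite Rabs_mult, Rabs_inv, (Rabs_right S) by lra.
   replace (2 * INR d * La * / (INR N * c1) * e) with ((La * (2 * INR d * e)) * / (INR N * c1)) by ring.
   apply Rmult_le_compat; try lra. apply Rabs_pos. apply Rlt_le, Rinv_0_lt_compat; lra.
   apply Rinv_le_contravar; nra.
 - pose proof (Ha _ (dist_nonneg x' i j)). fold r' in H1.
   unfold Rdiv. rewrite !Rabs_mult, Rabs_inv, (Rabs_right (a r')), (Rabs_right (S * S')) by nra.
   replace (c2 * (INR N * La * 2 * INR d) * / (INR N * c1 * (INR N * c1)) * e)
     with (c2 * (INR N * La * 2 * INR d * e) * / (INR N * c1 * (INR N * c1))) by ring.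
   pose proof (Rabs_pos (S' - S)). apply Rmult_le_compat. nra. apply Rlt_le, Rinv_0_lt_compat; nra.
   apply Rmult_le_compat; try lra.
   apply Rinv_le_contravar. assert (0 < INR N * c1) by nra. apply Rmult_lt_0_compat; lra. apply Rmult_le_compat; nra. Qed.

Lemma force_lip x v x' v' ex ev B i k : (i < N)%nat -> (k < d)%nat ->
  (forall i k, (i < N)%nat -> (k < d)%nat -> Rabs (x i k - x' i k) <= ex) ->
  (forall i k, (i < N)%nat -> (k < d)%nat -> Rabs (v i k - v' i k) <= ev) ->
  (forall i k, (i < N)%nat -> (k < d)%nat -> Rabs (v' i k) <= B) ->
  Rabs (mt_force N d kappa a x v i k - mt_force N d kappa a x' v' i k) <=
    kappa * (2 * ev + INR N * (Lw * ex) * (2 * B)).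
Proof. intros Hi Hk' Hx Hv HB. unfold mt_force. rewrite <- Rmult_minus_distr_l, Rabs_mult, Rabs_right by lra.
 apply Rmult_le_compat_l; [lra|]. rewrite <- sumR_minus.
 eapply Rle_trans; [apply sumR_abs|].
 eapply Rle_trans with (sumR N (fun j => mt_weight N d a x i j * (2 * ev) + Lw * ex * (2 * B))).
 - apply sumR_le. intros j Hj.
   replace (mt_weight N d a x i j * (v j k - v i k) - mt_weight N d a x' i j * (v' j k - v' i k)) with
     (mt_weight N d a x i j * ((v j k - v' j k) - (v i k - v' i k)) + (mt_weight N d a x i j - mt_weight N d a x' i j) * (v' j k - v' i k)) by ring.
   eapply Rle_trans; [apply Rabs_triang|]. rewrite !Rabs_mult. pose proof (weight_nonneg x i j).
   rewrite (Rabs_right (mt_weight N d a x i j)) by lra. apply Rplus_le_compat.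
   + apply Rmult_le_compat_l; auto. eapply Rle_trans; [apply Rabs_triang|]. rewrite Rabs_Ropp.
     pose proof (Hv j k Hj Hk'). pose proof (Hv i k Hi Hk'). lra.
   + apply Rmult_le_compat; try apply Rabs_pos. apply weight_lip; auto.
     eapply Rle_trans; [apply Rabs_triang|]. rewrite Rabs_Ropp.
     pose proof (HB j k Hj Hk'). pose proof (HB i k Hi Hk'). lra.
 - rewrite sumR_plus, sumR_const.
   rewrite (sumR_ext _ (fun j => mt_weight N d a x i j * (2 * ev)) (fun j => (2 * ev) * mt_weight N d a x i j)) by (intros; ring).
   rewrite sumR_scal, weight_sum. lra. Qed.


Section D.
Variables (h : R) (x0 v0 : config).
Hypothesis Hh : 0 < h.
Hypothesis Hhk : h * kappa < 1.

Definition xs n := fst (mt_discrete N d kappa a h x0 v0 n).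
Definition vs n := snd (mt_discrete N d kappa a h x0 v0 n).

Lemma xs_S n : xs (S n) = fun i k => xs n i k + h * vs n i k.
Proof. unfold xs, vs; simpl. destruct (mt_discrete N d kappa a h x0 v0 n); reflexivity. Qed.
Lemma vs_S n : vs (S n) = fun i k => vs n i k + h * mt_force N d kappa a (xs n) (vs n) i k.
Proof. unfold xs, vs; simpl. destruct (mt_discrete N d kappa a h x0 v0 n); reflexivity. Qed.
Lemma xs_0 : xs 0 = x0. Proof. reflexivity. Qed.
Lemma vs_0 : vs 0 = v0. Proof. reflexivity. Qed.

Definition beta := c1 / c2.
Definition rho := 1 - h * kappa * beta.
Definition DD := diam N d v0.

Lemma beta_pos : 0 < beta /\ beta <= 1.
Proof. unfold beta. split. apply Rdiv_lt_0_compat; lra.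
 apply Rmult_le_reg_r with c2; [lra|]. unfold Rdiv. rewrite Rmult_assoc, Rinv_l by lra. lra. Qed.

Lemma rho_bounds : 0 <= rho < 1.
Proof. unfold rho. pose proof beta_pos. assert (0 < h * kappa) by nra. split; nra. Qed.

Lemma DD_nonneg : 0 <= DD. Proof. apply diam_nonneg. Qed.

Lemma vs_step n i k : vs (S n) i k =
  (1 - h * kappa) * vs n i k + h * kappa * sumR N (fun j => mt_weight N d a (xs n) i j * vs n j k).
Proof. rewrite vs_S. rewrite force_eq. ring. Qed.

Definition inv k n := exists m M, v0 0%nat k - DD <= m /\ M <= v0 0%nat k + DD /\
  M - m <= rho ^ n * (2 * DD) /\ forall j, (j < N)%nat -> m <= vs n j k <= M.

Lemma inv_all k : (k < d)%nat -> forall n, inv k n.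
Proof. intros Hkd n. induction n.
 - exists (v0 0%nat k - DD), (v0 0%nat k + DD). split; [lra|]. split; [lra|]. split; [simpl; lra|].
   intros j Hj; rewrite vs_0; pose proof (coord_le_diam N d v0 j 0 k Hj ltac:(lia) Hkd) as Hc.
   unfold DD; apply Rabs_le_inv in Hc; lra.
 - destruct IHn as (m & M & H1 & H2 & H3 & H4).
   set (S := sumR N (fun j => vs n j k)).
   pose proof wmin_pos as Hw.
   pose proof N_wmin as HNw. fold beta in HNw.
   pose proof beta_pos. pose proof rho_bounds. pose proof INRN_pos.
   assert (Hc : 0 <= h * kappa <= 1) by nra.
   assert (HS1 : S <= INR N * M). { unfold S. rewrite <- sumR_const. apply sumR_le. intros j Hj; apply H4; auto. }
   assert (HS2 : INR N * m <= S). { unfold S. rewrite <- sumR_const. apply sumR_le. intros j Hj; apply H4; auto. }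
   exists (rho * m + h * kappa * wmin * S), (rho * M + h * kappa * wmin * S).
   assert (Erho : rho = 1 - h * kappa * (INR N * wmin)) by (unfold rho; rewrite HNw; ring).
   repeat split.
   + assert (m <= rho * m + h * kappa * wmin * S); [|lra].
     rewrite Erho. assert (h * kappa * wmin * (INR N * m) <= h * kappa * wmin * S).
     apply Rmult_le_compat_l; [nra|auto]. nra.
   + assert (rho * M + h * kappa * wmin * S <= M); [|lra].
     rewrite Erho. assert (h * kappa * wmin * S <= h * kappa * wmin * (INR N * M)).
     apply Rmult_le_compat_l; [nra|auto]. nra.
   + simpl. replace (rho * M + h * kappa * wmin * S - (rho * m + h * kappa * wmin * S))
       with (rho * (M - m)) by ring. rewrite Rmult_assoc. apply Rmult_le_compat_l; lra.
   + rewrite vs_step. rewrite Erho. unfold S.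
     apply (conv_lower N _ _ _ (fun j => vs n j k)); auto. intros; apply weight_ge; auto. apply weight_sum; auto.
     intros; apply H4; auto.
   + rewrite vs_step. rewrite Erho. unfold S.
     apply (conv_upper N _ _ _ (fun j => vs n j k)); auto. intros; apply weight_ge; auto. apply weight_sum; auto.
     intros; apply H4; auto.
Qed.

Lemma vs_bound n j k : (j < N)%nat -> (k < d)%nat -> Rabs (vs n j k) <= Rabs (v0 0%nat k) + DD.
Proof. intros Hj Hkd. destruct (inv_all k Hkd n) as (m & M & H1 & H2 & H3 & H4).
 specialize (H4 j Hj). apply Rabs_le. pose proof (Rabs_le_inv (v0 0%nat k) _ (Rle_refl _)). lra. Qed.

Lemma vs_range n i j k : (i < N)%nat -> (j < N)%nat -> (k < d)%nat ->
  Rabs (vs n i k - vs n j k) <= rho ^ n * (2 * DD).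
Proof. intros Hi Hj Hkd. destruct (inv_all k Hkd n) as (m & M & H1 & H2 & H3 & H4).
 pose proof (H4 i Hi). pose proof (H4 j Hj). apply Rabs_le. lra. Qed.

Lemma force_bound n i k : (i < N)%nat -> (k < d)%nat ->
  Rabs (mt_force N d kappa a (xs n) (vs n) i k) <= kappa * (rho ^ n * (2 * DD)).
Proof. intros Hi Hkd. unfold mt_force. rewrite Rabs_mult, (Rabs_right kappa) by lra.
 apply Rmult_le_compat_l; [lra|]. eapply Rle_trans; [apply sumR_abs|].
 eapply Rle_trans with (sumR N (fun j => (rho ^ n * (2 * DD)) * mt_weight N d a (xs n) i j)).
 apply sumR_le. intros j Hj. rewrite Rabs_mult, Rabs_right by (apply Rle_ge, weight_nonneg; auto).
 rewrite Rmult_comm. apply Rmult_le_compat_r. apply weight_nonneg; auto. apply vs_range; auto.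
 rewrite sumR_scal, weight_sum by auto. lra. Qed.

Lemma vs_tail m p i k : (i < N)%nat -> (k < d)%nat ->
  Rabs (vs (m + p) i k - vs m i k) <= 2 * DD / beta * (rho ^ m - rho ^ (m + p)).
Proof. intros Hi Hkd. pose proof beta_pos. induction p.
 - rewrite Nat.add_0_r. unfold Rminus. rewrite !Rplus_opp_r, Rabs_R0, Rmult_0_r. lra.
 - rewrite Nat.add_succ_r, vs_S.
   replace (vs (m + p)%nat i k + h * mt_force N d kappa a (xs (m + p)) (vs (m + p)) i k - vs m i k)
     with ((vs (m + p)%nat i k - vs m i k) + h * mt_force N d kappa a (xs (m + p)) (vs (m + p)) i k) by ring.
   eapply Rle_trans; [apply Rabs_triang|]. rewrite Rabs_mult, (Rabs_right h) by lra.
   pose proof (force_bound (m + p) i k Hi Hkd).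
   assert (h * Rabs (mt_force N d kappa a (xs (m + p)) (vs (m + p)) i k) <= h * (kappa * (rho ^ (m + p) * (2 * DD)))).
   apply Rmult_le_compat_l; lra.
   replace (2 * DD / beta * (rho ^ m - rho ^ S (m + p))) with
     (2 * DD / beta * (rho ^ m - rho ^ (m + p)) + h * (kappa * (rho ^ (m + p) * (2 * DD)))).
   lra. simpl. set (q := rho ^ (m+p)). set (q0 := rho ^ m). unfold rho. field. lra. Qed.

Lemma xs_diff n i j k : (i < N)%nat -> (j < N)%nat -> (k < d)%nat ->
  Rabs ((xs n i k - xs n j k) - (x0 i k - x0 j k)) <= 2 * DD / (kappa * beta) * (1 - rho ^ n).
Proof. intros Hi Hj Hkd. pose proof beta_pos. induction n.
 - rewrite xs_0. simpl. unfold Rminus. rewrite Rplus_opp_r, Rabs_R0. lra.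
 - rewrite xs_S.
   replace (xs n i k + h * vs n i k - (xs n j k + h * vs n j k) - (x0 i k - x0 j k)) with
     ((xs n i k - xs n j k - (x0 i k - x0 j k)) + h * (vs n i k - vs n j k)) by ring.
   eapply Rle_trans; [apply Rabs_triang|]. rewrite Rabs_mult, (Rabs_right h) by lra.
   pose proof (vs_range n i j k Hi Hj Hkd).
   assert (h * Rabs (vs n i k - vs n j k) <= h * (rho ^ n * (2 * DD))) by (apply Rmult_le_compat_l; lra).
   replace (2 * DD / (kappa * beta) * (1 - rho ^ S n)) with
     (2 * DD / (kappa * beta) * (1 - rho ^ n) + h * (rho ^ n * (2 * DD))).
   lra. simpl. set (q := rho ^ n). unfold rho. field. split; lra. Qed.

End D.


Lemma fin_bound (n : nat) (P : nat -> R -> Prop) :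
  (forall i b b', b <= b' -> P i b -> P i b') ->
  (forall i, (i < n)%nat -> exists b, P i b) -> exists b, 0 <= b /\ forall i, (i < n)%nat -> P i b.
Proof. intros Hm. induction n; intros H.
 - exists 0. split; [lra|]. intros; lia.
 - destruct IHn as (b & Hb & Hb'). intros; apply H; lia.
   destruct (H n ltac:(lia)) as (b2 & Hb2).
   exists (Rmax b b2). split. eapply Rle_trans; [apply Hb|apply Rmax_l].
   intros i Hi. destruct (Nat.eq_dec i n). subst. eapply Hm; [apply Rmax_r|auto].
   eapply Hm; [apply Rmax_l|apply Hb'; lia]. Qed.

Lemma exp_pow_n x n : exp x ^ n = exp (INR n * x).
Proof. induction n. simpl. rewrite Rmult_0_l, exp_0. auto.
 rewrite S_INR. simpl pow. rewrite IHn, <- exp_plus. f_equal. ring. Qed.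

Lemma ext_deriv (f df : R -> R) t : 0 < t -> is_derive f t (df t) -> is_derive (fun s => f (Rmax 0 s)) t (df t).
Proof. intros Ht H. apply is_derive_ext_loc with f; auto.
 exists (mkposreal t Ht). intros y Hy. change (Rabs (y - t) < t) in Hy. apply Rabs_def2 in Hy.
 rewrite Rmax_right by lra. auto. Qed.

Lemma ext_cont (f df : R -> R) : (forall t, 0 < t -> is_derive f t (df t)) ->
  filterlim f (at_right 0) (locally (f 0)) ->
  forall t, 0 <= t -> continuity_pt (fun s => f (Rmax 0 s)) t.
Proof. intros Hd Hl t Ht. destruct Ht as [Ht|Ht].
 - apply continuity_pt_filterlim. apply (ex_derive_continuous (fun s => f (Rmax 0 s))).
   exists (df t). apply ext_deriv; auto.
 - subst. apply continuity_pt_locally. intros eps.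
   pose proof (proj1 (filterlim_locally f (f 0)) Hl eps) as Hl'. destruct Hl' as [del Hdel].
   exists del. intros y Hy. rewrite (Rmax_left 0 0) by lra.
   destruct (Rle_lt_dec y 0).
   + rewrite Rmax_left by lra. rewrite Rminus_eq_0, Rabs_R0. apply cond_pos.
   + rewrite Rmax_right by lra. apply (Hdel y Hy r). Qed.

Lemma ext_mvt (f df : R -> R) : (forall t, 0 < t -> is_derive f t (df t)) ->
  filterlim f (at_right 0) (locally (f 0)) ->
  forall s t, 0 <= s <= t -> exists c, s <= c <= t /\ f t - f s = df c * (t - s).
Proof. intros Hd Hl s t Hst.
 destruct (MVT_gen (fun s => f (Rmax 0 s)) s t df) as (c & Hc & Heq).
 - intros x Hx. rewrite Rmin_left, Rmax_right in Hx by lra. apply ext_deriv; [lra|]. apply Hd; lra.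
 - intros x Hx. rewrite Rmin_left, Rmax_right in Hx by lra. apply (ext_cont f df); auto; lra.
 - rewrite Rmin_left, Rmax_right in Hc by lra. exists c. split; auto.
   rewrite (Rmax_right 0 t), (Rmax_right 0 s) in Heq by lra. auto. Qed.

Lemma ext_bound (f df : R -> R) : (forall t, 0 < t -> is_derive f t (df t)) ->
  filterlim f (at_right 0) (locally (f 0)) ->
  forall T, 0 <= T -> exists b, forall t, 0 <= t <= T -> Rabs (f t) <= b.
Proof. intros Hd Hl T HT.
 destruct (continuity_ab_maj (fun s => Rabs (f (Rmax 0 s))) 0 T HT) as (Mx & HM & _).
 - intros c Hc. apply (continuity_pt_comp (fun s => f (Rmax 0 s)) Rabs). apply (ext_cont f df); auto; lra.
   apply Rcontinuity_abs.
 - exists (Rabs (f (Rmax 0 Mx))). intros t Ht. specialize (HM t Ht). simpl in HM.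
   rewrite Rmax_right in HM by lra. auto. Qed.

Section C.
Variables (X V : R -> config).
Hypothesis Hsol : mt_solution N d kappa a X V.

Lemma mvt_X i k s t : (i < N)%nat -> (k < d)%nat -> 0 <= s <= t ->
  exists c, s <= c <= t /\ X t i k - X s i k = V c i k * (t - s).
Proof. intros Hi Hkd Hst. destruct Hsol as [H1 H2].
 apply (ext_mvt (fun s => X s i k) (fun c => V c i k)); auto.
 intros; apply H1; auto. apply H2; auto. Qed.

Lemma mvt_V i k s t : (i < N)%nat -> (k < d)%nat -> 0 <= s <= t ->
  exists c, s <= c <= t /\ V t i k - V s i k = mt_force N d kappa a (X c) (V c) i k * (t - s).
Proof. intros Hi Hkd Hst. destruct Hsol as [H1 H2].
 apply (ext_mvt (fun s => V s i k) (fun c => mt_force N d kappa a (X c) (V c) i k)); auto.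
 intros; apply H1; auto. apply H2; auto. Qed.

Lemma V_bound T : 0 <= T -> exists B, 0 <= B /\ forall t i k, 0 <= t <= T -> (i < N)%nat -> (k < d)%nat ->
  Rabs (V t i k) <= B.
Proof. intros HT. destruct Hsol as [H1 H2].
 destruct (fin_bound N (fun i b => forall t k, 0 <= t <= T -> (k < d)%nat -> Rabs (V t i k) <= b)) as (B & HB & HB').
 - intros i b b' Hb Hp t k Ht Hk'. eapply Rle_trans; [apply Hp; auto| auto].
 - intros i Hi.
   destruct (fin_bound d (fun k b => forall t, 0 <= t <= T -> Rabs (V t i k) <= b)) as (B & HB & HB').
   + intros k b b' Hb Hp t Ht. eapply Rle_trans; [apply Hp; auto| auto].
   + intros k Hk'. apply (ext_bound (fun s => V s i k) (fun c => mt_force N d kappa a (X c) (V c) i k)).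
     intros; apply H1; auto. apply H2; auto. auto.
   + exists B. intros; apply HB'; auto.
 - exists B. split; auto. Qed.

Lemma force_bnd x v B i k : (i < N)%nat -> (k < d)%nat ->
  (forall i k, (i < N)%nat -> (k < d)%nat -> Rabs (v i k) <= B) ->
  Rabs (mt_force N d kappa a x v i k) <= kappa * (2 * B).
Proof. intros Hi Hkd HB.
 assert (E : mt_force N d kappa a x (fun _ _ => 0) i k = 0).
 { unfold mt_force. rewrite (sumR_ext _ _ (fun _ => 0)) by (intros; ring). rewrite sumR_const. ring. }
 pose proof (force_lip x v x (fun _ _ => 0) 0 B 0 i k Hi Hkd) as Hl.
 rewrite E, Rminus_0_r in Hl.
 replace (kappa * (2 * B)) with (kappa * (2 * B + INR N * (Lw * 0) * (2 * 0))) by ring.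
 apply Hl.
 - intros; rewrite Rminus_eq_0, Rabs_R0; lra.
 - intros; rewrite Rminus_0_r; auto.
 - intros; rewrite Rabs_R0; lra. Qed.

Lemma euler T : 0 <= T -> exists C, 0 <= C /\ forall h, 0 < h -> h * kappa < 1 ->
  forall n, INR n * h <= T -> forall i k, (i < N)%nat -> (k < d)%nat ->
  Rabs (xs h (X 0) (V 0) n i k - X (INR n * h) i k) <= C * h /\
  Rabs (vs h (X 0) (V 0) n i k - V (INR n * h) i k) <= C * h.
Proof. intros HT. destruct (V_bound T HT) as (B & HB0 & HB).
 set (D := DD (V 0)). assert (HD : 0 <= D) by apply DD_nonneg.
 set (Bb := B + D). set (Bf := kappa * (2 * B)).
 set (LF := kappa * (2 + INR N * Lw * (2 * Bb))).
 set (L := 1 + LF). set (C2 := Bf + LF * (B + Bf)).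
 pose proof Lw_nonneg as HLw. pose proof INRN_pos as HNp.
 assert (HBf : 0 <= Bf) by (unfold Bf; nra).
 assert (HLF : 0 <= LF). { unfold LF, Bb. apply Rmult_le_pos; [lra|].
   assert (0 <= INR N * Lw * (2 * (B + D))) by (repeat apply Rmult_le_pos; lra). lra. }
 assert (HC2 : 0 <= C2) by (unfold C2; nra).
 exists (T * C2 * exp (L * T)). split. apply Rmult_le_pos; [nra|]. apply Rlt_le, exp_pos.
 intros h Hh Hhk.
 assert (Flip : forall x v x' v' e i k, (i < N)%nat -> (k < d)%nat ->
   (forall i k, (i < N)%nat -> (k < d)%nat -> Rabs (x i k - x' i k) <= e) ->
   (forall i k, (i < N)%nat -> (k < d)%nat -> Rabs (v i k - v' i k) <= e) ->
   (forall i k, (i < N)%nat -> (k < d)%nat -> Rabs (v' i k) <= Bb) ->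
   Rabs (mt_force N d kappa a x v i k - mt_force N d kappa a x' v' i k) <= LF * e).
 { intros. replace (LF * e) with (kappa * (2 * e + INR N * (Lw * e) * (2 * Bb))) by (unfold LF; ring).
   apply force_lip; auto. }
 assert (HBB : B <= Bb) by (unfold Bb; lra).
 assert (TX : forall t i k, 0 <= t -> t + h <= T -> (i < N)%nat -> (k < d)%nat ->
   Rabs (X (t + h) i k - X t i k - h * V t i k) <= h ^ 2 * Bf).
 { intros t i k Ht Hth Hi Hkd. destruct (mvt_X i k t (t + h) Hi Hkd ltac:(lra)) as (c & Hc & E).
   rewrite E. destruct (mvt_V i k t c Hi Hkd ltac:(lra)) as (c' & Hc' & E').
   replace (V c i k * (t + h - t) - h * V t i k) with (h * (V c i k - V t i k)) by ring.
   rewrite E', Rabs_mult, Rabs_mult, (Rabs_right h) by lra.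
   rewrite (Rabs_right (c - t)) by lra.
   assert (Rabs (mt_force N d kappa a (X c') (V c') i k) <= Bf).
   { apply force_bnd; auto. intros; apply HB; auto; lra. }
   pose proof (Rabs_pos (mt_force N d kappa a (X c') (V c') i k)).
   assert (Rabs (mt_force N d kappa a (X c') (V c') i k) * (c - t) <= Bf * h) by (apply Rmult_le_compat; lra).
   simpl. nra. }
 assert (TV : forall t i k, 0 <= t -> t + h <= T -> (i < N)%nat -> (k < d)%nat ->
   Rabs (V (t + h) i k - V t i k - h * mt_force N d kappa a (X t) (V t) i k) <= h ^ 2 * (LF * (B + Bf))).
 { intros t i k Ht Hth Hi Hkd. destruct (mvt_V i k t (t + h) Hi Hkd ltac:(lra)) as (c & Hc & E).
   rewrite E.
   replace (mt_force N d kappa a (X c) (V c) i k * (t + h - t) - h * mt_force N d kappa a (X t) (V t) i k)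
     with (h * (mt_force N d kappa a (X c) (V c) i k - mt_force N d kappa a (X t) (V t) i k)) by ring.
   rewrite Rabs_mult, (Rabs_right h) by lra.
   assert (Rabs (mt_force N d kappa a (X c) (V c) i k - mt_force N d kappa a (X t) (V t) i k) <= LF * (h * (B + Bf))).
   { apply Flip; auto.
     - intros j l Hj Hl. destruct (mvt_X j l t c Hj Hl ltac:(lra)) as (c' & Hc' & E').
       rewrite E', Rabs_mult, (Rabs_right (c - t)) by lra.
       assert (Rabs (V c' j l) <= B) by (apply HB; auto; lra).
       pose proof (Rabs_pos (V c' j l)).
       assert (Rabs (V c' j l) * (c - t) <= B * h) by (apply Rmult_le_compat; lra). nra.
     - intros j l Hj Hl. destruct (mvt_V j l t c Hj Hl ltac:(lra)) as (c' & Hc' & E').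
       rewrite E', Rabs_mult, (Rabs_right (c - t)) by lra.
       assert (Rabs (mt_force N d kappa a (X c') (V c') j l) <= Bf).
       { apply force_bnd; auto. intros; apply HB; auto; lra. }
       pose proof (Rabs_pos (mt_force N d kappa a (X c') (V c') j l)).
       assert (Rabs (mt_force N d kappa a (X c') (V c') j l) * (c - t) <= Bf * h) by (apply Rmult_le_compat; lra). nra.
     - intros; eapply Rle_trans; [apply HB; auto; lra|auto]. }
   assert (h * Rabs (mt_force N d kappa a (X c) (V c) i k - mt_force N d kappa a (X t) (V t) i k) <= h * (LF * (h * (B + Bf))))
     by (apply Rmult_le_compat_l; lra).
   simpl. nra. }
 set (bnd := fun n => INR n * h ^ 2 * C2 * (1 + h * L) ^ n).
 assert (Hbnd0 : forall n, 0 <= bnd n).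
 { intros n. unfold bnd. pose proof (pos_INR n). apply Rmult_le_pos. apply Rmult_le_pos. apply Rmult_le_pos; auto.
   apply pow2_ge_0. auto. apply pow_le. unfold L; nra. }
 assert (Hstep : forall n, (1 + h * L) * bnd n + h ^ 2 * C2 <= bnd (S n)).
 { intros n. unfold bnd. rewrite S_INR. simpl pow.
   assert (1 <= (1 + h * L) ^ n) by (apply pow_R1_Rle; unfold L; nra).
   assert (0 <= h ^ 2 * C2) by (apply Rmult_le_pos; [apply pow2_ge_0|auto]).
   assert (1 <= 1 + h * L) by (unfold L; nra). simpl in H0.
   assert (h * (h * 1) * C2 * 1 <= h * (h * 1) * C2 * ((1 + h * L) * (1 + h * L) ^ n)).
   apply Rmult_le_compat_l. nra. nra. nra. }
 assert (Main : forall n, INR n * h <= T -> forall i k, (i < N)%nat -> (k < d)%nat ->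
   Rabs (xs h (X 0) (V 0) n i k - X (INR n * h) i k) <= bnd n /\
   Rabs (vs h (X 0) (V 0) n i k - V (INR n * h) i k) <= bnd n).
 { induction n; intros Hn i k Hi Hkd.
   - simpl INR. rewrite Rmult_0_l. rewrite xs_0, vs_0. rewrite !Rminus_eq_0, Rabs_R0. unfold bnd. simpl INR.
     split; nra.
   - assert (Hn' : INR n * h <= T) by (rewrite S_INR in Hn; nra).
     assert (Et : INR (S n) * h = INR n * h + h) by (rewrite S_INR; ring).
     assert (Ht0 : 0 <= INR n * h) by (pose proof (pos_INR n); nra).
     rewrite Et in Hn |- *. set (t := INR n * h) in *.
     pose proof (IHn Hn') as IH.
     rewrite xs_S, vs_S. split.
     + replace (xs h (X 0) (V 0) n i k + h * vs h (X 0) (V 0) n i k - X (t + h) i k) with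
         ((xs h (X 0) (V 0) n i k - X t i k) + h * (vs h (X 0) (V 0) n i k - V t i k) - (X (t + h) i k - X t i k - h * V t i k)) by ring.
       destruct (IH i k Hi Hkd) as [I1 I2]. pose proof (TX t i k Ht0 Hn Hi Hkd).
       eapply Rle_trans; [apply Rabs_triang|]. rewrite Rabs_Ropp.
       eapply Rle_trans; [apply Rplus_le_compat_r; apply Rabs_triang|].
       rewrite Rabs_mult, (Rabs_right h) by lra.
       eapply Rle_trans; [|apply Hstep].
       assert (h * Rabs (vs h (X 0) (V 0) n i k - V t i k) <= h * bnd n) by (apply Rmult_le_compat_l; lra).
       assert (h ^ 2 * Bf <= h ^ 2 * C2). { apply Rmult_le_compat_l. apply pow2_ge_0. unfold C2.
         assert (0 <= LF * (B + Bf)) by (apply Rmult_le_pos; lra). lra. }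
       assert (h * bnd n <= h * L * bnd n). { rewrite Rmult_assoc. rewrite (Rmult_comm L). rewrite <- Rmult_assoc.
         assert (0 <= h * bnd n) by (specialize (Hbnd0 n); nra). unfold L. nra. }
       nra.
     + replace (vs h (X 0) (V 0) n i k + h * mt_force N d kappa a (xs h (X 0) (V 0) n) (vs h (X 0) (V 0) n) i k - V (t + h) i k) with
         ((vs h (X 0) (V 0) n i k - V t i k) + h * (mt_force N d kappa a (xs h (X 0) (V 0) n) (vs h (X 0) (V 0) n) i k - mt_force N d kappa a (X t) (V t) i k)
           - (V (t + h) i k - V t i k - h * mt_force N d kappa a (X t) (V t) i k)) by ring.
       destruct (IH i k Hi Hkd) as [I1 I2]. pose proof (TV t i k Ht0 Hn Hi Hkd).
       eapply Rle_trans; [apply Rabs_triang|]. rewrite Rabs_Ropp.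
       eapply Rle_trans; [apply Rplus_le_compat_r; apply Rabs_triang|].
       rewrite Rabs_mult, (Rabs_right h) by lra.
       eapply Rle_trans; [|apply Hstep].
       assert (Rabs (mt_force N d kappa a (xs h (X 0) (V 0) n) (vs h (X 0) (V 0) n) i k - mt_force N d kappa a (X t) (V t) i k) <= LF * bnd n).
       { apply Flip; auto. intros; apply IH; auto. intros; apply IH; auto.
         intros; eapply Rle_trans; [apply HB; auto; lra|auto]. }
       assert (h * Rabs (mt_force N d kappa a (xs h (X 0) (V 0) n) (vs h (X 0) (V 0) n) i k - mt_force N d kappa a (X t) (V t) i k) <= h * (LF * bnd n)) by (apply Rmult_le_compat_l; lra).
       assert (h ^ 2 * (LF * (B + Bf)) <= h ^ 2 * C2). { apply Rmult_le_compat_l. apply pow2_ge_0. unfold C2. lra. }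
       assert (h * (LF * bnd n) <= h * L * bnd n). { 
         assert (0 <= h * bnd n) by (specialize (Hbnd0 n); nra). unfold L. nra. }
       nra. }
 intros n Hn i k Hi Hkd. destruct (Main n Hn i k Hi Hkd) as [M1 M2].
 assert (bnd n <= T * C2 * exp (L * T) * h).
 { unfold bnd. assert (HL : 0 <= L) by (unfold L; lra).
   assert (E0 : (1 + h * L) ^ n <= exp (h * L) ^ n).
   { apply pow_incr. split. nra. apply exp_ineq1_le. }
   rewrite exp_pow_n in E0.
   assert (E2: INR n * (h * L) <= L * T) by nra.
   assert (E3 : exp (INR n * (h * L)) <= exp (L * T)).
   { destruct E2 as [E2|E2]; [left; apply exp_increasing; auto | rewrite E2; lra]. }
   assert (P0 : 0 <= (1 + h * L) ^ n) by (apply pow_le; nra).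
   assert (0 <= INR n * h) by (pose proof (pos_INR n); nra).
   replace (INR n * h ^ 2 * C2 * (1 + h * L) ^ n) with ((INR n * h) * (h * C2 * (1 + h * L) ^ n)) by ring.
   replace (T * C2 * exp (L * T) * h) with (T * (h * C2 * exp (L * T))) by ring.
   apply Rmult_le_compat; auto. apply Rmult_le_pos; [nra|auto].
   apply Rmult_le_compat_l; [nra|lra]. }
 split; lra.
Qed.

End C.

Lemma exp_mono x y : x <= y -> exp x <= exp y.
Proof. intros [H|H]; [left; apply exp_increasing; auto| rewrite H; lra]. Qed.

Lemma rho_exp h n : 0 < h -> h * kappa < 1 -> rho h ^ n <= exp (- (kappa * beta) * (INR n * h)).
Proof. intros Hh Hhk. pose proof (rho_bounds h Hh Hhk).
 eapply Rle_trans. apply pow_incr. split. lra. unfold rho.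
 replace (1 - h * kappa * beta) with (1 + (- (h * kappa * beta))) by ring. apply exp_ineq1_le.
 rewrite exp_pow_n. apply exp_mono. lra. Qed.

Lemma fine_step h eps : 0 < h -> 0 < eps -> exists K : nat, (1 <= K)%nat /\ h / INR K * kappa < 1 /\ h / INR K < eps.
Proof. intros Hh He. destruct (INR_unbounded (h * kappa + h / eps + 1)) as [K HK].
 assert (0 < h / eps) by (apply Rdiv_lt_0_compat; auto).
 assert (HK0 : 0 < INR K) by nra.
 exists K. split. destruct K. simpl in HK0; lra. lia. split.
 - unfold Rdiv. rewrite Rmult_assoc, (Rmult_comm (/ INR K)), <- Rmult_assoc.
   apply Rmult_lt_reg_r with (INR K); auto. rewrite Rmult_assoc, Rinv_l by lra. nra.
 - apply Rmult_lt_reg_r with (INR K); auto. unfold Rdiv. rewrite Rmult_assoc, Rinv_l by lra.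
   rewrite Rmult_1_r.
   assert (0 < h * kappa) by nra. assert (h / eps < INR K) by lra.
   assert (E : h = (h / eps) * eps) by (field; lra). rewrite E at 1.
   rewrite (Rmult_comm eps). apply Rmult_lt_compat_r; auto. Qed.

Lemma floor_ex y h : 0 <= y -> 0 < h -> exists m : nat, INR m * h <= y < INR m * h + h.
Proof. intros Hy Hh. destruct (INR_unbounded (y / h)) as [K HK].
 assert (HK' : y < INR K * h). { apply Rmult_lt_reg_r with (/ h). apply Rinv_0_lt_compat; auto.
   rewrite Rmult_assoc, Rinv_r by lra. unfold Rdiv in HK. lra. }
 clear HK. induction K. simpl in HK'. lra.
 destruct (Rlt_le_dec y (INR K * h)). auto. exists K. rewrite S_INR in HK'. lra. Qed.

Section C2.
Variables (X V : R -> config).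
Hypothesis Hsol : mt_solution N d kappa a X V.

Lemma refine_eq h n K : (1 <= K)%nat -> INR (n * K) * (h / INR K) = INR n * h.
Proof. intros HK. rewrite mult_INR. assert (0 < INR K) by (apply lt_0_INR; lia). field. lra. Qed.

Lemma cont_xdiff h n i j k : 0 < h -> (i < N)%nat -> (j < N)%nat -> (k < d)%nat ->
  Rabs ((X (INR n * h) i k - X (INR n * h) j k) - (X 0 i k - X 0 j k)) <= 2 * DD (V 0) / (kappa * beta).
Proof. intros Hh Hi Hj Hkd. apply le_epsilon. intros eps He.
 assert (HT : 0 <= INR n * h) by (pose proof (pos_INR n); nra).
 destruct (euler X V Hsol (INR n * h) HT) as (C & HC & HE).
 destruct (fine_step h (eps / (2 * (C + 1))) Hh) as (K & HK1 & HK2 & HK3).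
 apply Rdiv_lt_0_compat; lra.
 set (h' := h / INR K) in *. assert (Hh' : 0 < h'). { unfold h'. apply Rdiv_lt_0_compat; auto. apply lt_0_INR; lia. }
 rewrite <- (refine_eq h n K HK1). fold h'.
 assert (Hle : INR (n * K) * h' <= INR n * h) by (unfold h'; rewrite refine_eq; lra||auto).
 destruct (HE h' Hh' HK2 (n * K)%nat Hle i k Hi Hkd) as [E1 _].
 destruct (HE h' Hh' HK2 (n * K)%nat Hle j k Hj Hkd) as [E2 _].
 pose proof (xs_diff h' (X 0) (V 0) Hh' HK2 (n * K) i j k Hi Hj Hkd) as Hx.
 pose proof (rho_bounds h' Hh' HK2). pose proof (pow_le (rho h') (n * K) ltac:(lra)).
 pose proof beta_pos. pose proof (DD_nonneg (V 0)).
 assert (HQ : 0 <= 2 * DD (V 0) / (kappa * beta)). { apply Rmult_le_pos. lra. apply Rlt_le, Rinv_0_lt_compat; nra. }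
 assert (Hx' : Rabs ((xs h' (X 0) (V 0) (n * K) i k - xs h' (X 0) (V 0) (n * K) j k) - (X 0 i k - X 0 j k)) <= 2 * DD (V 0) / (kappa * beta)).
 { eapply Rle_trans; [apply Hx|]. nra. }
 assert (C * h' <= eps / 2). { assert (C * h' <= (C + 1) * h') by nra.
   assert (Hq : (C + 1) * h' <= (C + 1) * (eps / (2 * (C + 1)))) by (apply Rmult_le_compat_l; lra).
   replace ((C + 1) * (eps / (2 * (C + 1)))) with (eps / 2) in Hq by (field; lra). lra. }
 set (t := INR (n * K) * h') in *.
 replace (X t i k - X t j k - (X 0 i k - X 0 j k)) with
   ((xs h' (X 0) (V 0) (n * K) i k - xs h' (X 0) (V 0) (n * K) j k - (X 0 i k - X 0 j k))
    - (xs h' (X 0) (V 0) (n * K) i k - X t i k) + (xs h' (X 0) (V 0) (n * K) j k - X t j k)) by ring.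
 eapply Rle_trans; [apply Rabs_triang|]. eapply Rle_trans; [apply Rplus_le_compat_r; apply Rabs_triang|].
 rewrite Rabs_Ropp. lra. Qed.

Lemma cont_vtail h m p i k : 0 < h -> (i < N)%nat -> (k < d)%nat ->
  Rabs (V (INR (m + p) * h) i k - V (INR m * h) i k) <= 2 * DD (V 0) / beta * exp (- (kappa * beta) * (INR m * h)).
Proof. intros Hh Hi Hkd. apply le_epsilon. intros eps He.
 assert (HT : 0 <= INR (m + p) * h) by (pose proof (pos_INR (m + p)); nra).
 destruct (euler X V Hsol (INR (m + p) * h) HT) as (C & HC & HE).
 destruct (fine_step h (eps / (2 * (C + 1))) Hh) as (K & HK1 & HK2 & HK3).
 apply Rdiv_lt_0_compat; lra.
 set (h' := h / INR K) in *. assert (Hh' : 0 < h'). { unfold h'. apply Rdiv_lt_0_compat; auto. apply lt_0_INR; lia. }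
 rewrite <- (refine_eq h (m + p) K HK1), <- (refine_eq h m K HK1). fold h'.
 assert (Hle1 : INR ((m + p) * K) * h' <= INR (m + p) * h) by (unfold h'; rewrite refine_eq; lra||auto).
 assert (Hle2 : INR (m * K) * h' <= INR (m + p) * h).
 { unfold h'. rewrite refine_eq by auto. apply Rmult_le_compat_r; [lra|]. apply le_INR; lia. }
 destruct (HE h' Hh' HK2 ((m + p) * K)%nat Hle1 i k Hi Hkd) as [_ E1].
 destruct (HE h' Hh' HK2 (m * K)%nat Hle2 i k Hi Hkd) as [_ E2].
 pose proof (vs_tail h' (X 0) (V 0) Hh' HK2 (m * K) (p * K) i k Hi Hkd) as Hv.
 replace (m * K + p * K)%nat with ((m + p) * K)%nat in Hv by lia.
 pose proof (rho_bounds h' Hh' HK2). pose proof (pow_le (rho h') ((m + p) * K) ltac:(lra)).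
 pose proof beta_pos. pose proof (DD_nonneg (V 0)).
 pose proof (rho_exp h' (m * K) Hh' HK2) as Hr. unfold h' in Hr. rewrite refine_eq in Hr by auto. fold h' in Hr.
 assert (HQ : 0 <= 2 * DD (V 0) / beta). { apply Rmult_le_pos. lra. apply Rlt_le, Rinv_0_lt_compat; nra. }
 assert (Hv' : Rabs (vs h' (X 0) (V 0) ((m + p) * K) i k - vs h' (X 0) (V 0) (m * K) i k) <= 2 * DD (V 0) / beta * exp (- (kappa * beta) * (INR m * h))).
 { eapply Rle_trans; [apply Hv|]. apply Rmult_le_compat_l; auto. lra. }
 assert (C * h' <= eps / 2). { assert (C * h' <= (C + 1) * h') by nra.
   assert (Hq : (C + 1) * h' <= (C + 1) * (eps / (2 * (C + 1)))) by (apply Rmult_le_compat_l; lra).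
   replace ((C + 1) * (eps / (2 * (C + 1)))) with (eps / 2) in Hq by (field; lra). lra. }
 set (t1 := INR ((m + p) * K) * h') in *. set (t2 := INR (m * K) * h') in *.
 replace (V t1 i k - V t2 i k) with
   ((vs h' (X 0) (V 0) ((m + p) * K) i k - vs h' (X 0) (V 0) (m * K) i k)
    - (vs h' (X 0) (V 0) ((m + p) * K) i k - V t1 i k) + (vs h' (X 0) (V 0) (m * K) i k - V t2 i k)) by ring.
 eapply Rle_trans; [apply Rabs_triang|]. eapply Rle_trans; [apply Rplus_le_compat_r; apply Rabs_triang|].
 rewrite Rabs_Ropp. assert (Et2 : t2 = INR m * h) by (unfold t2, h'; apply refine_eq; auto). rewrite <- Et2 in Hv'. lra. Qed.

End C2.

Lemma sum3_bound (g : nat -> nat -> nat -> R) b : 0 <= b ->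
  (forall i j k, (i < N)%nat -> (j < N)%nat -> (k < d)%nat -> g i j k <= b ^ 2) ->
  sqrt (sumR N (fun i => sumR N (fun j => sumR d (fun k => g i j k)))) <= sqrt (INR N * INR N * INR d) * b.
Proof. intros Hb H. pose proof (pos_INR N). pose proof (pos_INR d).
 rewrite <- (sqrt_pow2 b Hb). rewrite <- sqrt_mult_alt by (apply Rmult_le_pos; [nra|lra]).
 apply sqrt_le_1_alt.
 replace (INR N * INR N * INR d * b ^ 2) with (sumR N (fun _ => sumR N (fun _ => sumR d (fun _ => b ^ 2)))).
 apply sumR_le; intros i Hi. apply sumR_le; intros j Hj. apply sumR_le; intros k Hk'. auto.
 rewrite !sumR_const. ring. Qed.

Lemma sum2_bound (g : nat -> nat -> R) b : 0 <= b ->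
  (forall i k, (i < N)%nat -> (k < d)%nat -> g i k <= b ^ 2) ->
  sqrt (sumR N (fun i => sumR d (fun k => g i k))) <= sqrt (INR N * INR d) * b.
Proof. intros Hb H. pose proof (pos_INR N). pose proof (pos_INR d).
 rewrite <- (sqrt_pow2 b Hb). rewrite <- sqrt_mult_alt by (apply Rmult_le_pos; lra).
 apply sqrt_le_1_alt.
 replace (INR N * INR d * b ^ 2) with (sumR N (fun _ => sumR d (fun _ => b ^ 2))).
 apply sumR_le; intros i Hi. apply sumR_le; intros k Hk'. auto.
 rewrite !sumR_const. ring. Qed.

Lemma sq_le x b : Rabs x <= b -> x ^ 2 <= b ^ 2.
Proof. intros H. rewrite <- (pow2_abs x). apply pow_incr. split; [apply Rabs_pos|auto]. Qed.

Definition c0 := sqrt (INR N * INR N * INR d) * (4 / (kappa * beta)).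

Section C3.
Variables (X V : R -> config).
Hypothesis Hsol : mt_solution N d kappa a X V.

Lemma claim1 h n : 0 < h -> h * kappa < 1 ->
  fro_diff N d (xs h (X 0) (V 0) n) (X (INR n * h)) <= c0 * diam N d (V 0).
Proof. intros Hh Hhk. pose proof beta_pos. pose proof (DD_nonneg (V 0)). unfold DD in H0.
 assert (HQ : 0 <= 2 * diam N d (V 0) / (kappa * beta)). { apply Rmult_le_pos. lra. apply Rlt_le, Rinv_0_lt_compat; nra. }
 replace (c0 * diam N d (V 0)) with (sqrt (INR N * INR N * INR d) * (2 * (2 * diam N d (V 0) / (kappa * beta)))).
 2:{ unfold c0. field. nra. }
 unfold fro_diff. apply sum3_bound. lra.
 intros i j k Hi Hj Hkd. apply sq_le.
 pose proof (xs_diff h (X 0) (V 0) Hh Hhk n i j k Hi Hj Hkd) as H1.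
 pose proof (cont_xdiff X V Hsol h n i j k Hh Hi Hj Hkd) as H2. unfold DD in H1, H2.
 pose proof (rho_bounds h Hh Hhk). pose proof (pow_le (rho h) n ltac:(lra)).
 assert (H1' : Rabs (xs h (X 0) (V 0) n i k - xs h (X 0) (V 0) n j k - (X 0 i k - X 0 j k)) <= 2 * diam N d (V 0) / (kappa * beta)).
 { eapply Rle_trans; [apply H1|]. nra. }
 replace (xs h (X 0) (V 0) n i k - xs h (X 0) (V 0) n j k - (X (INR n * h) i k - X (INR n * h) j k)) with
   ((xs h (X 0) (V 0) n i k - xs h (X 0) (V 0) n j k - (X 0 i k - X 0 j k)) -
    (X (INR n * h) i k - X (INR n * h) j k - (X 0 i k - X 0 j k))) by ring.
 eapply Rle_trans; [apply Rabs_triang|]. rewrite Rabs_Ropp. lra. Qed.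

Lemma claim2 eps : 0 < eps -> exists delta, 0 < delta /\ forall h, 0 < h -> h * kappa < 1 -> h < 1 -> h < delta ->
  forall n, full_norm_diff N d (vs h (X 0) (V 0) n) (V (INR n * h)) <= eps.
Proof. intros He. pose proof beta_pos. pose proof (DD_nonneg (V 0)).
 set (s := sqrt (INR N * INR d)). assert (Hs : 0 <= s) by apply sqrt_pos.
 set (b := eps / (s + 1)). assert (Hb : 0 < b) by (apply Rdiv_lt_0_compat; lra).
 assert (Hsb : s * b <= eps). { unfold b. apply Rmult_le_reg_r with (s + 1). lra.
   replace (s * (eps / (s + 1)) * (s + 1)) with (s * eps) by (field; lra). nra. }
 set (Q := 2 * DD (V 0) / beta). assert (HQ : 0 <= Q). { apply Rmult_le_pos. lra. apply Rlt_le, Rinv_0_lt_compat; nra. }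
 set (T := 3 * Q / (b * (kappa * beta))).
 assert (HkB : 0 < kappa * beta) by nra.
 assert (HT : 0 <= T). { unfold T. apply Rmult_le_pos. lra. apply Rlt_le, Rinv_0_lt_compat; nra. }
 assert (Htail : forall y, T <= y -> Q * exp (- (kappa * beta) * y) <= b / 3).
 { intros y Hy. assert (Hy0 : 0 <= y) by lra.
   assert (Hexp : 1 + (kappa * beta) * y <= exp ((kappa * beta) * y)) by apply exp_ineq1_le.
   assert (E : exp (- (kappa * beta) * y) = / exp ((kappa * beta) * y)).
   { rewrite <- exp_Ropp. f_equal. ring. }
   rewrite E. pose proof (exp_pos ((kappa * beta) * y)).
   apply Rmult_le_reg_r with (exp (kappa * beta * y)); auto.
   rewrite Rmult_assoc, Rinv_l by lra. rewrite Rmult_1_r.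
   assert (3 * Q <= b * (kappa * beta) * T). { unfold T. right. field. split; lra. }
   assert (b * (kappa * beta) * T <= b * (kappa * beta) * y) by (apply Rmult_le_compat_l; nra).
   nra. }
 destruct (euler X V Hsol (T + 1) ltac:(lra)) as (C & HC & HE).
 exists (b / (3 * (C + 1))). split. apply Rdiv_lt_0_compat; lra.
 intros h Hh Hhk Hh1 Hhd n.
 assert (HCh : C * h <= b / 3).
 { assert (C * h <= (C + 1) * h) by nra.
   assert (Hq : (C + 1) * h <= (C + 1) * (b / (3 * (C + 1)))) by (apply Rmult_le_compat_l; lra).
   replace ((C + 1) * (b / (3 * (C + 1)))) with (b / 3) in Hq by (field; lra). lra. }
 unfold full_norm_diff. eapply Rle_trans; [apply (sum2_bound _ b); [lra|] | fold s; lra].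
 intros i k Hi Hkd. apply sq_le.
 destruct (Rle_lt_dec (INR n * h) (T + 1)) as [Hn|Hn].
 - destruct (HE h Hh Hhk n Hn i k Hi Hkd) as [_ E]. lra.
 - destruct (floor_ex (T + 1) h ltac:(lra) Hh) as (m & Hm1 & Hm2).
   assert (Hmn : (m <= n)%nat). { assert (INR m < INR n) by (apply Rmult_lt_reg_r with h; lra).
     apply INR_lt in H1. lia. }
   replace n with (m + (n - m))%nat by lia. set (p := (n - m)%nat).
   destruct (HE h Hh Hhk m Hm1 i k Hi Hkd) as [_ E].
   pose proof (vs_tail h (X 0) (V 0) Hh Hhk m p i k Hi Hkd) as Hv.
   pose proof (cont_vtail X V Hsol h m p i k Hh Hi Hkd) as Hc.
   pose proof (rho_exp h m Hh Hhk) as Hr.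
   pose proof (rho_bounds h Hh Hhk). pose proof (pow_le (rho h) (m + p) ltac:(lra)).
   assert (HmT : T <= INR m * h) by lra.
   pose proof (Htail _ HmT) as Ht. fold Q in Hc.
   assert (Hv' : Rabs (vs h (X 0) (V 0) (m + p) i k - vs h (X 0) (V 0) m i k) <= Q * exp (- (kappa * beta) * (INR m * h))).
   { eapply Rle_trans; [apply Hv|]. fold Q. apply Rmult_le_compat_l; auto. lra. }
   replace (vs h (X 0) (V 0) (m + p) i k - V (INR (m + p) * h) i k) with
     ((vs h (X 0) (V 0) (m + p) i k - vs h (X 0) (V 0) m i k) + (vs h (X 0) (V 0) m i k - V (INR m * h) i k)
      - (V (INR (m + p) * h) i k - V (INR m * h) i k)) by ring.
   eapply Rle_trans; [apply Rabs_triang|]. eapply Rle_trans; [apply Rplus_le_compat_r; apply Rabs_triang|].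
   rewrite Rabs_Ropp. lra. Qed.

End C3.

End Main.

Theorem theorem3p10 (N d : nat) (kappa : R) (a : R -> R) (c1 c2 La : R) :
  (1 <= N)%nat -> (1 <= d)%nat -> 0 < kappa ->
  0 < c1 -> c1 <= c2 -> 0 < La ->
  (forall r, 0 <= r -> c1 <= a r <= c2) ->
  (forall r s, 0 <= r -> 0 <= s -> Rabs (a r - a s) <= La * Rabs (r - s)) ->
  exists c0 : R,
  forall X V : R -> config,
    mt_solution N d kappa a X V ->
    (* D(V(0)) <= kappa * int_{D(X(0))}^oo a(s) ds  (improper integral in Rbar) *)
    Rbar_le (Finite (diam N d (V 0)))
      (Rbar_mult (Finite kappa)
         (Lim (fun T => RInt a (diam N d (X 0)) T) p_infty)) ->
    fro N d (X 0) < M_const N La c1 c2 ->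
    fro N d (V 0) < kappa * RInt (psi_fun N La c1 c2) (fro N d (X 0)) (M_const N La c1 c2) ->
    (* limsup_{h->0} sup_n ||Delta^{x,h}(n) - Delta^x(nh)||_F <= c0 D(V(0)) *)
    (forall eps, 0 < eps -> exists delta, 0 < delta /\
       forall h, 0 < h -> h < Rmin 1 (1 / kappa) -> h < delta ->
         forall n : nat,
           fro_diff N d (fst (mt_discrete N d kappa a h (X 0) (V 0) n)) (X (INR n * h))
             <= c0 * diam N d (V 0) + eps) /\
    (* limsup_{h->0} sup_n ||V^h(n) - V(nh)|| = 0 *)
    (forall eps, 0 < eps -> exists delta, 0 < delta /\
       forall h, 0 < h -> h < Rmin 1 (1 / kappa) -> h < delta ->
         forall n : nat,
           full_norm_diff N d (snd (mt_discrete N d kappa a h (X 0) (V 0) n)) (V (INR n * h))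
             <= eps).
Proof.
 intros HN Hd Hk Hc1 Hc12 HLa Ha HaL.
 exists (c0 N d kappa c1 c2). intros X V Hsol _ _ _.
 assert (Hmin : forall h, h < Rmin 1 (1 / kappa) -> h * kappa < 1 /\ h < 1).
 { intros h Hh. pose proof (Rmin_r 1 (1 / kappa)). pose proof (Rmin_l 1 (1 / kappa)). split; [|lra].
   assert (h < 1 / kappa) by lra. apply Rmult_lt_reg_r with (/ kappa). apply Rinv_0_lt_compat; lra.
   rewrite Rmult_assoc, Rinv_r, Rmult_1_r by lra. unfold Rdiv in H1. lra. }
 split.
 - intros eps He. exists 1. split; [lra|]. intros h Hh Hm _ n.
   destruct (Hmin h Hm) as [Hhk _].
   pose proof (claim1 N d kappa a c1 c2 La HN Hk Hc1 Hc12 HLa Ha HaL X V Hsol h n Hh Hhk) as H.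
   unfold xs in H. lra.
 - intros eps He. destruct (claim2 N d kappa a c1 c2 La HN Hk Hc1 Hc12 HLa Ha HaL X V Hsol eps He) as (delta & Hdl & H).
   exists delta. split; auto. intros h Hh Hm Hhd n. destruct (Hmin h Hm) as [Hhk Hh1].
   pose proof (H h Hh Hhk Hh1 Hhd n) as H'. unfold vs in H'. exact H'.
Qed.
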